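(* Let $G$ be a finite group with $d(G) \geq 2$, and let $1 \leq k \leq d(G)$. Assume that $G$ is $k$-flexible. Let $N$ be a normal subgroup of $G$ such that $d(G/N) = d(G)$. Then $G/N$ is $k$-flexible.
   Context: For a finite group $H$, $d(H)$ denotes the minimal size of a generating set of $H$. For an integer $1 \leq k \leq d(G)$, a finite group $G$ is called $k$-flexible if for any $x_1,\dots,x_k \in G$ with $d(\langle x_1,\dots,x_k\rangle)=k$ there exist $x_{k+1},\dots,x_{d(G)} \in G$ such that $\langle x_1,\dots,x_{d(G)}\rangle = G$. *)

(* Defs.v *)
From mathcomp Require Import all_boot all_fingroup.
Set Implicit Arguments. Unset Strict Implicit. Unset Printing Implicit Defensive.
Local Open Scope group_scope.

(* d(A): minimal size of a generating set of A (for A a group; junk #|A| bound otherwise).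
   Minimum over all X : {set gT} with <<X>> = A. *)
Definition gen_rank (gT : finGroupType) (A : {set gT}) : nat :=
  \big[minn/#|A|]_(X : {set gT} | <<X>> == A) #|X|.

Definition flexible (gT : finGroupType) (A : {set gT}) (k : nat) : Prop :=
  forall x : 'I_k -> gT,
    (forall i, x i \in A) ->
    gen_rank <<[set x i | i : 'I_k]>> = k ->
    exists y : 'I_(gen_rank A - k) -> gT,
      (forall j, y j \in A) /\
      <<[set x i | i : 'I_k] :|: [set y j | j : 'I_(gen_rank A - k)]>> = A.

(* Main.v *)
Require Import Defs.
From mathcomp Require Import all_boot all_fingroup.
Local Open Scope group_scope.

Lemma gen_rank_le {gT : finGroupType} (A X : {set gT}) :
  <<X>> = A -> gen_rank A <= #|X|.
Proof.
move=> hX; rewrite /gen_rank.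
have : X \in index_enum {set gT} by rewrite mem_index_enum.
elim: (index_enum _) => [//|Y s IH]; rewrite inE big_cons => /orP [/eqP <-| /IH h].
  by rewrite hX eqxx; exact: geq_minl.
by case: ifP => _ //; exact: leq_trans (geq_minr _ _) h.
Qed.

Lemma gen_rank_ex {gT : finGroupType} (A : {group gT}) :
  exists X : {set gT}, <<X>> = A /\ #|X| = gen_rank A.
Proof.
rewrite /gen_rank.
apply: (big_ind (fun n => exists X : {set gT}, <<X>> = A /\ #|X| = n)).
- by exists (A : {set gT}); split; [exact: genGid|].
- move=> a b [X [h1 h2]] [Y [h3 h4]]; case: (leqP a b) => ab.
  + by exists X; split=> //; rewrite h2; apply/esym/minn_idPl.
  + by exists Y; split=> //; rewrite h4; apply/esym/minn_idPr/ltnW.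
- by move=> X /eqP h; exists X.
Qed.

Lemma gen_rank_morph (aT rT : finGroupType) (D : {group aT})
  (f : {morphism D >-> rT}) (H : {group aT}) :
  H \subset D -> gen_rank (f @* H) <= gen_rank H.
Proof.
move=> sHD; have [X [hX cX]] := gen_rank_ex H.
have sXD : X \subset D by apply: subset_trans sHD; rewrite -hX; exact: subset_gen.
rewrite -cX; apply: (@leq_trans #|f @* X|).
  by apply: gen_rank_le; rewrite -morphim_gen // hX.
by rewrite morphimEsub //; exact: leq_imset_card.
Qed.

Lemma gen_rank_set_le (gT : finGroupType) (k : nat) (x : 'I_k -> gT) :
  gen_rank <<[set x i | i : 'I_k]>> <= k.
Proof.
apply: leq_trans (@gen_rank_le _ _ [set x i | i : 'I_k] (erefl _)) _.
by apply: leq_trans (leq_imset_card _ _) _; rewrite card_ord.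
Qed.

Theorem lemma2p1 (gT : finGroupType) (G N : {group gT}) (k : nat) :
  2 <= gen_rank G -> 1 <= k <= gen_rank G -> flexible G k ->
  N <| G -> gen_rank (G / N) = gen_rank G ->
  flexible (G / N) k.
Proof.
move=> _ _ flex nNG eqd x xG hx.
have nG : G \subset 'N(N) by case/andP: nNG.
pose g i := odflt 1 [pick h in G | coset N h == x i].
have gP i : g i \in G /\ coset N (g i) = x i.
  rewrite /g; case: pickP => [h /andP [hG /eqP ->] //|none].
  have := xG i; rewrite quotientE => /morphimP [h hN hG xi].
  by have := none h; rewrite hG xi eqxx.
have gG i : g i \in G by case: (gP i).
have sgG : [set g i | i : 'I_k] \subset G by apply/subsetP=> _ /imsetP [i _ ->].
have sgN : [set g i | i : 'I_k] \subset 'N(N) := subset_trans sgG nG.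
have imS (B : {set gT}) (I : finType) (h : I -> gT) :
    (forall i, h i \in G) ->
    coset N @* [set h i | i : I] = [set coset N (h i) | i : I].
  move=> hG; rewrite morphimEsub; first by rewrite -imset_comp.
  by apply/subsetP=> _ /imsetP [i _ ->]; apply: (subsetP nG).
have eqx : [set x i | i : 'I_k] = coset N @* [set g i | i : 'I_k].
  rewrite (imS set0) //; apply: eq_imset => i; by case: (gP i).
have rk : gen_rank <<[set g i | i : 'I_k]>> = k.
  apply/eqP; rewrite eqn_leq gen_rank_set_le /=.
  rewrite -{1}hx eqx -morphim_gen //.
  by apply: gen_rank_morph; rewrite gen_subG.
have [y [yG hy]] := flex g gG rk.
rewrite eqd.
exists (fun j => coset N (y j)); split.
  by move=> j; rewrite quotientE; apply: mem_morphim; [apply: (subsetP nG)|].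
rewrite eqx -(imS set0 _ y yG) -morphimU -morphim_gen; last first.
  rewrite subUset sgN; apply/subsetP=> _ /imsetP [j _ ->].
  by apply: (subsetP nG).
by rewrite hy quotientE.
Qed.
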